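(* Let $(X,\tau)$ be an extended locally convex space and let $\tau_F$ be its finest locally convex topology. A (finite-valued) seminorm on $X$ is continuous with respect to $\tau$ if and only if it is continuous with respect to $\tau_F$.
   Context: An extended seminorm on a vector space $X$ over $\mathbb{R}$ or $\mathbb{C}$ is a map $\rho:X\to[0,\infty]$ with $\rho(\alpha x)=|\alpha|\rho(x)$ and $\rho(x+y)\le\rho(x)+\rho(y)$. An extended locally convex space $(X,\tau)$ is a vector space with the topology induced by a family $\{\rho_i\}$ of extended seminorms (neighborhood base at $x_0$: $\{x:\max_{i\in J}\rho_i(x-x_0)<\varepsilon\}$, $J$ finite, $\varepsilon>0$). A locally convex topology is one induced in this way by finite-valued seminorms. The finest locally convex topology $\tau_F$ of $(X,\tau)$ is the locally convex topology on $X$ with $\tau_F\subseteq\tau$ such that every locally convex topology $\sigma\subseteq\tau$ on $X$ satisfies $\sigma\subseteq\tau_F$. *)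

(* Defs.v *)
From mathcomp Require Import all_boot all_order all_algebra.
From mathcomp Require Import all_classical all_reals all_analysis.
From mathcomp Require Export complex.
Set Implicit Arguments. Unset Strict Implicit. Unset Printing Implicit Defensive.
Import Order.TTheory GRing.Theory Num.Theory numFieldNormedType.Exports.
Local Open Scope classical_set_scope.
Local Open Scope ring_scope.

(* Throughout: R is the real field, K the scalar field (R or C = R[i]),
   absK : K -> R the modulus |.| on K, X a K-vector space.
   A topology on X is represented by its family of open sets. *)

Section Defs.
Variables (R : realType) (K : nzRingType) (absK : K -> R) (X : lmodType K).

Definition ext_seminorm (rho : X -> \bar R) : Prop :=
  [/\ forall x, (0 <= rho x)%E,
      forall (a : K) (x : X), rho (a *: x) = ((absK a)%:E * rho x)%E
    & forall x y : X, (rho (x + y)%R <= rho x + rho y)%E].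

Definition seminorm (p : X -> R) : Prop :=
  [/\ forall x, 0 <= p x,
      forall (a : K) x, p (a *: x) = absK a * p x
    & forall x y, p (x + y) <= p x + p y].

Definition induced_topology (I : Type) (rho : I -> X -> \bar R)
  : set (set X) :=
  [set U | forall x0, U x0 ->
     exists (J : set I) (eps : R), [/\ finite_set J, 0 < eps &
       [set x | forall i, J i ->
                  (rho i (x - x0)%R < eps%:E)%E] `<=` U]].

Definition ext_locally_convex (tau : set (set X)) : Prop :=
  exists (I : Type) (rho : I -> X -> \bar R),
    (forall i, ext_seminorm (rho i)) /\ tau = induced_topology rho.

Definition locally_convex (sigma : set (set X)) : Prop :=
  exists (I : Type) (p : I -> X -> R),
    (forall i, seminorm (p i)) /\
    sigma = induced_topology (fun i x => (p i x)%:E).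

Definition finest_lc_topology (tau tauF : set (set X)) : Prop :=
  [/\ locally_convex tauF, tauF `<=` tau &
      forall sigma, locally_convex sigma -> sigma `<=` tau -> sigma `<=` tauF].

Definition continuous_wrt (tau : set (set X)) (p : X -> R) : Prop :=
  forall A : set R, open A -> tau (p @^-1` A).

End Defs.

Definition theorem3p5_for (R : realType) (K : nzRingType) (absK : K -> R)
  : Prop :=
  forall (X : lmodType K) (tau tauF : set (set X)),
    ext_locally_convex absK tau ->
    finest_lc_topology absK tau tauF ->
    forall p : X -> R, seminorm absK p ->
      (continuous_wrt tau p <-> continuous_wrt tauF p).

(* Main.v *)
Require Import Defs.
From mathcomp Require Import all_boot all_order all_algebra.
From mathcomp Require Import lra.
From mathcomp Require Import all_classical all_reals all_analysis.
From mathcomp Require Import complex.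
Import Order.TTheory GRing.Theory Num.Theory numFieldNormedType.Exports.
Local Open Scope classical_set_scope.
Local Open Scope ring_scope.

Lemma general (R : realType) (K : nzRingType) (absK : K -> R) :
  absK 0 = 0 -> absK (-1) = 1 -> theorem3p5_for absK.
Proof.
move=> a0 aN1 X tau tauF [I [rho [_ ->]]] [_ Ftau Fmax] p [p0 pZ pD].
split; last by move=> H A oA; apply: Ftau; apply: H.
move=> Hc.
have pzero : p 0 = 0 by rewrite -(scale0r (0:X)) pZ a0 mul0r.
have psym : forall y, p (- y) = p y.
  by move=> y; rewrite -scaleN1r pZ aN1 mul1r.
pose sigma := induced_topology (fun (_ : unit) (x : X) => (p x)%:E).
have lcs : Defs.locally_convex absK sigma.
  by exists unit, (fun _ => p); split.
have ssub : sigma `<=` induced_topology rho.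
  move=> U HU x0 /HU [J [eps [_ eps0 sub]]].
  have : induced_topology rho (p @^-1` [set r | r < eps]).
    apply: Hc; exact: open_lt.
  move=> /(_ 0) /=; rewrite pzero => /(_ eps0) [J' [e' [fJ' e'0 sub']]].
  exists J', e'; split => // x Hx; apply: sub => i _ /=.
  rewrite lte_fin.
  have := sub' (x - x0); apply => j /Hx.
  by rewrite subr0.
move=> A oA.
apply: (Fmax sigma lcs ssub).
move=> x0 /= Ax0.
have := oA _ Ax0 => /nbhs_ballP [e /= e0 be].
exists [set tt], e; split.
- exact: finite_set1.
- exact: e0.
move=> x /= /(_ tt erefl); rewrite lte_fin => lt.
apply: be; rewrite /ball /=.
rewrite ltr_norml; apply/andP; split.
  have := pD (x - x0) x0; rewrite subrK => h.
  lra.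
have := pD (x0 - x) x; rewrite subrK -[x0 - x]opprB psym => h.
lra.
Qed.

Theorem theorem3p5 (R : realType) :
  theorem3p5_for (Num.norm : R -> R) /\
  theorem3p5_for (@ComplexField.Normc.normc R).
Proof.
split; apply: general.
- exact: normr0.
- by rewrite normrN normr1.
- exact: ComplexField.Normc.normc0.
- exact: (etrans (@normcN R 1) (@ComplexField.Normc.normc1 R)).
Qed.
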